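(* Let $I=(G,E^\ell,E^f,s,t,c,d)$ be an instance of the Bilevel Shortest Path problem in the weak path completion variant, where $G$ is directed or undirected. Then there exists a pair $(X,Y)$ with $X\subseteq E^\ell$ and $Y\subseteq E^f$ such that $X$ is an optimal choice for the leader's problem, $Y$ is an optimal choice for the follower's problem given $X$, and $X\cup Y$ is an $s$-$t$-path, i.e. $X\cup Y\in\mathcal P_{st}$.
   Context: An instance is $I=(G,E^\ell,E^f,s,t,c,d)$: $G=(V,E)$ a simple directed or undirected graph, $E=E^\ell\cup E^f$ a partition (leader's and follower's edges), $s,t\in V$, $c,d:E\to\mathbb{R}_{\ge0}$; $f(Z)=\sum_{e\in Z}f(e)$. Paths are simple and identified with edge sets; $\mathcal P_{st}$, the set of $s$-$t$-paths, is assumed nonempty. Weak variant: $\mathrm{OPT}_{\mathrm{weak}}(I)=\min c(X\cup Y)$ over $X\subseteq E^\ell$ and $Y\in\arg\min\{d(Y'):Y'\subseteq E^f,\ \exists P\subseteq X\cup Y' \text{ with } P\in\mathcal P_{st}\}$; leader choices making the follower's problem infeasible are infeasible; optimistic setting: among follower-optimal responses the follower picks one minimizing $c(Y)$. An optimal choice for the leader is a feasible $X$ attaining $\mathrm{OPT}_{\mathrm{weak}}(I)$. *)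

(* Defs.v *)
From HB Require Import structures.
From mathcomp Require Import all_boot all_order all_algebra.
Set Implicit Arguments. Unset Strict Implicit. Unset Printing Implicit Defensive.
Import Order.TTheory GRing.Theory Num.Theory.
Local Open Scope ring_scope.

(* If [directed] then e is the arc
   (src e, dst e); otherwise it is the undirected edge {src e, dst e}. *)
Section Bilevel.
Variables (V E : finType) (directed : bool) (src dst : E -> V).

Definition joins (e : E) (u v : V) : bool :=
  if directed then (src e == u) && (dst e == v)
  else ((src e == u) && (dst e == v)) || ((src e == v) && (dst e == u)).

Definition simple_graph : Prop :=
  (forall e, src e != dst e) /\
  (forall e e' u v, joins e u v -> joins e' u v -> e = e').

(* P is (the edge set of) a simple s-t-path: there is a vertex sequence
   s = v_0, v_1, ..., v_k = t of pairwise distinct vertices and edges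
   e_1..e_k with e_i traversable from v_(i-1) to v_i, and P = {e_1..e_k}. *)
Definition is_st_path (s t : V) (P : {set E}) : Prop :=
  exists (p : seq V) (es : seq E),
    [/\ last s p = t, uniq (s :: p), size es = size p,
        all (fun x => joins x.1 x.2.1 x.2.2) (zip es (zip (s :: p) p))
      & P = [set e in es]].

Variables (R : realFieldType) (El : {set E}) (s t : V) (c d : E -> R).

Definition cost (f : E -> R) (Z : {set E}) : R := \sum_(e in Z) f e.

Definition follower_feasible (X Y : {set E}) : Prop :=
  Y \subset ~: El /\ exists P, is_st_path s t P /\ P \subset X :|: Y.

Definition follower_argmin (X Y : {set E}) : Prop :=
  follower_feasible X Y /\
  forall Y' : {set E}, follower_feasible X Y' -> cost d Y <= cost d Y'.

(* optimal (optimistic) follower choice: among the d-minimal responses,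
   one minimizing c(Y) *)
Definition follower_optimal (X Y : {set E}) : Prop :=
  follower_argmin X Y /\
  forall Y' : {set E}, follower_argmin X Y' -> cost c Y <= cost c Y'.

Definition leader_optimal (X : {set E}) : Prop :=
  X \subset El /\
  exists Y, follower_argmin X Y /\
    forall X' Y' : {set E}, X' \subset El -> follower_argmin X' Y' ->
      cost c (X :|: Y) <= cost c (X' :|: Y').

End Bilevel.

(* Main.v *)
Require Import Defs.
From HB Require Import structures.
From mathcomp Require Import all_boot all_order all_algebra.
Import Order.TTheory GRing.Theory Num.Theory.
Local Open Scope ring_scope.

From Stdlib Require Import Classical.

Lemma exists_min_seq (R : realFieldType) (T : eqType) (P : T -> Prop) (f : T -> R)
  (s : seq T) : (exists x, x \in s /\ P x) ->
  exists x, P x /\ forall y, y \in s -> P y -> f x <= f y.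
Proof.
elim: s => [|a s IH]; first by case=> x [].
move=> [x [xs Px]].
case: (classic (exists x, x \in s /\ P x)) => [/IH [m [Pm Hm]]|Hn].
  case: (classic (P a)) => Pa.
    case/orP: (le_total (f m) (f a)) => Hma.
      exists m; split=> // y; rewrite inE => /orP[/eqP->|ys] Py //; exact: Hm.
    exists a; split=> // y; rewrite inE => /orP[/eqP->|ys] Py //.
    exact: le_trans Hma (Hm _ ys Py).
  exists m; split=> // y; rewrite inE => /orP[/eqP->|ys] Py //; last exact: Hm.
have Pa : P a.
  move: xs; rewrite inE => /orP[/eqP <-//|xs]; by case: Hn; exists x.
exists a; split=> // y; rewrite inE => /orP[/eqP->|ys] Py //.
by case: Hn; exists y.
Qed.

Lemma exists_min (R : realFieldType) (T : finType) (P : T -> Prop) (f : T -> R) :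
  (exists x, P x) -> exists x, P x /\ forall y, P y -> f x <= f y.
Proof.
move=> [x Px].
have [m [Pm Hm]] := @exists_min_seq R T P f (enum T) (ex_intro _ x (conj (mem_enum _ x) Px)).
exists m; split=> // y Py; apply: Hm => //; exact: mem_enum.
Qed.

Lemma cost_sub (R : realFieldType) (E : finType) (f : E -> R) (A B : {set E}) :
  (forall e, 0 <= f e) -> A \subset B -> cost f A <= cost f B.
Proof.
move=> f0 AB; rewrite /cost [X in _ <= X](big_setID A) /=.
rewrite (setIidPr AB) lerDl; apply: sumr_ge0 => i _; exact: f0.
Qed.

Lemma cost_split (R : realFieldType) (E : finType) (El : {set E}) (f : E -> R) (X Y : {set E}) :
  X \subset El -> Y \subset ~: El -> cost f (X :|: Y) = cost f X + cost f Y.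
Proof.
move=> HX HY; rewrite /cost (big_setID El) /=.
have hs : forall e, [/\ e \in X -> e \in El, e \in Y -> e \notin El & true].
  by move=> e; split => // h; [exact: (subsetP HX) | have := subsetP HY e h; rewrite inE].
have -> : (X :|: Y) :&: El = X.
  apply/setP => e; have [h1 h2 _] := hs e; rewrite !inE; move: h1 h2.
  by case: (e \in X); case: (e \in Y); case: (e \in El) => //= h1 h2; first [by have := h1 isT | by have := h2 isT].
have -> : (X :|: Y) :\: El = Y.
  apply/setP => e; have [h1 h2 _] := hs e; rewrite !inE; move: h1 h2.
  by case: (e \in X); case: (e \in Y); case: (e \in El) => //= h1 h2; first [by have := h1 isT | by have := h2 isT].
by [].
Qed.

Arguments cost_sub {R E f A B}.
Arguments cost_split {R E El f X Y}.

Theorem lemma3p2 (R : realFieldType) (V E : finType) (directed : bool)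
    (src dst : E -> V) (El : {set E}) (s t : V) (c d : E -> R) :
  simple_graph directed src dst ->
  (forall e, 0 <= c e) -> (forall e, 0 <= d e) ->
  (exists P, is_st_path directed src dst s t P) ->
  exists X Y : {set E},
    [/\ X \subset El, Y \subset ~: El,
        leader_optimal directed src dst El s t c d X,
        follower_optimal directed src dst El s t c d X Y
      & is_st_path directed src dst s t (X :|: Y)].
Proof.
move=> _ c0 d0 [P0 HP0].
have feas : follower_feasible directed src dst El s t El (~: El).
  split; first exact: subxx.
  by exists P0; split => //; rewrite setUCr subsetT.
have [Y0 HY0] := @exists_min R _ _ (cost d) (ex_intro _ _ feas).
have [[Xs Ys] [[HXs HYs] Hmin]] := @exists_min R _
  (fun p : {set E} * {set E} => p.1 \subset El /\
          follower_argmin directed src dst El s t d p.1 p.2)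
  (fun p => cost c (p.1 :|: p.2)) (ex_intro _ (El, Y0) (conj (subxx _) HY0)).
simpl in HXs, HYs.
move: (HYs) => [[HYsEl [P [HP HPsub]]] HYsmin].
set X := P :&: El; set Y := P :\: El.
have hX : X \subset El by exact: subsetIr.
have hY : Y \subset ~: El by apply/subsetP => e; rewrite !inE => /andP[].
have hXY : X :|: Y = P by exact: setID.
have hYYs : Y \subset Ys.
  apply/subsetP => e; rewrite inE => /andP[eEl eP].
  have := subsetP HPsub e eP; rewrite inE => /orP[/(subsetP HXs)|//].
  by rewrite (negbTE eEl).
have hXXs : X \subset Xs.
  apply/subsetP => e; rewrite inE => /andP[eP eEl].
  have := subsetP HPsub e eP; rewrite inE => /orP[//|eY].
  by have := subsetP HYsEl e eY; rewrite inE eEl.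
have hargmin : follower_argmin directed src dst El s t d X Y.
  split.
    by split => //; exists P; rewrite hXY; split.
  move=> Y' [HY'El [P' [HP' HP'sub]]].
  apply: (le_trans (cost_sub d0 hYYs)); apply: HYsmin.
  split => //; exists P'; split => //.
  apply: subset_trans HP'sub _; exact: setSU.
have hcP : cost c P <= cost c (Xs :|: Ys) by exact: cost_sub.
exists X, Y; split => //.
- split => //; exists Y; split => //.
  move=> X' Y' HX' HY'; rewrite hXY; apply: (le_trans hcP).
  exact: (Hmin (X', Y') (conj HX' HY')).
- split => // Y' HY'.
  have h := Hmin (X, Y') (conj hX HY'); simpl in h.
  have HY'El : Y' \subset ~: El by case: HY' => [[]].
  have h2 := le_trans hcP h.
  by rewrite -hXY !(cost_split hX) // lerD2l in h2.
- by rewrite hXY.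
Qed.
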